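(* If $G$ is a pseudo-cograph, then every connected induced subgraph $H$ of $G$ has diameter at most $4$. Consequently, a pseudo-cograph contains no induced path $P_n$ with $n\ge6$.
   Context: Graphs finite, simple, undirected; $G-v$ is $G$ with $v$ deleted; the join of vertex-disjoint graphs adds all edges between them to the disjoint union; a cograph is a graph without induced $P_4$; the diameter is the maximum distance between two vertices. $G$ is a pseudo-cograph if $|V(G)|\le2$ or there are induced subgraphs $G_1,G_2$ of $G$ and $v\in V(G)$ with (F1) $V(G)=V(G_1)\cup V(G_2)$, $V(G_1)\cap V(G_2)=\{v\}$, $|V(G_1)|,|V(G_2)|>1$; (F2) $G_1,G_2$ are cographs; (F3) $G-v$ is the join or the disjoint union of $G_1-v$ and $G_2-v$. *)

(* Defs.v *)
(* A finite simple graph is a symmetric irreflexive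
   relation e on a finType T. Induced subgraphs are given by vertex sets. *)
From mathcomp Require Import all_boot.
Set Implicit Arguments. Unset Strict Implicit. Unset Printing Implicit Defensive.

Section Graphs.
Variables (T : finType) (e : rel T).

Definition simple_graph : Prop := symmetric e /\ irreflexive e.

Definition has_induced_P4 (S : {set T}) : Prop :=
  exists a b c d : T,
    [/\ [&& a \in S, b \in S, c \in S & d \in S],
        uniq [:: a; b; c; d],
        [&& e a b, e b c & e c d] &
        [&& ~~ e a c, ~~ e b d & ~~ e a d]].

Definition cograph (S : {set T}) : Prop := ~ has_induced_P4 S.

Definition join_split (S1 S2 : {set T}) (v : T) : Prop :=
  forall x y, x \in S1 :\ v -> y \in S2 :\ v -> e x y.

Definition union_split (S1 S2 : {set T}) (v : T) : Prop :=
  forall x y, x \in S1 :\ v -> y \in S2 :\ v -> ~~ e x y.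

Definition pseudo_cograph (S : {set T}) : Prop :=
  #|S| <= 2 \/
  exists (S1 S2 : {set T}) (v : T),
    [/\ [&& S1 \subset S, S2 \subset S & v \in S],
        [/\ S1 :|: S2 = S, S1 :&: S2 = [set v], 1 < #|S1| & 1 < #|S2|],
        cograph S1 /\ cograph S2 &
        join_split S1 S2 v \/ union_split S1 S2 v].

(* walk in G[U] from x to y with size p edges *)
Definition walk_in (U : {set T}) (x y : T) (p : seq T) : bool :=
  [&& path e x p, last x p == y & all (fun z => z \in U) (x :: p)].

Definition connected_in (U : {set T}) : Prop :=
  forall x y, x \in U -> y \in U -> exists p, walk_in U x y p.

Definition diameter_le (U : {set T}) (k : nat) : Prop :=
  forall x y, x \in U -> y \in U -> exists p, walk_in U x y p /\ size p <= k.

(* s is (the vertex sequence of) an induced path P_n in G, n = size s *)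
Definition induced_path (s : seq T) : Prop :=
  uniq s /\
  forall (x0 : T) (i j : nat), i < size s -> j < size s ->
    e (nth x0 s i) (nth x0 s j) = (j == i.+1) || (i == j.+1).
End Graphs.

(* Main.v *)
Require Import Defs.
From mathcomp Require Import all_boot.
From mathcomp Require Import zify.
Set Implicit Arguments. Unset Strict Implicit. Unset Printing Implicit Defensive.

Lemma combJ (T : Type) (P Q : T -> bool) (E : rel T) (a0 a1 a2 a3 a4 a5 : T) :
  symmetric E ->
  (forall x, P x || Q x) ->
  count (fun x => P x && Q x) [:: a0; a1; a2; a3; a4; a5] <= 1 ->
  (forall x y, P x -> ~~ Q x -> Q y -> ~~ P y -> E x y) ->
  ~~ E a0 a2 -> ~~ E a0 a3 -> ~~ E a0 a4 -> ~~ E a0 a5 -> ~~ E a1 a3 ->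
  ~~ E a1 a4 -> ~~ E a1 a5 -> ~~ E a2 a4 -> ~~ E a2 a5 -> ~~ E a3 a5 ->
  [|| [&& P a0, P a1, P a2 & P a3], [&& P a1, P a2, P a3 & P a4],
      [&& P a2, P a3, P a4 & P a5], [&& Q a0, Q a1, Q a2 & Q a3],
      [&& Q a1, Q a2, Q a3 & Q a4] | [&& Q a2, Q a3, Q a4 & Q a5]].
Proof.
move=> sE cov cnt J n02 n03 n04 n05 n13 n14 n15 n24 n25 n35.
have F : forall x y, ~~ E x y ->
   ~~ [&& P x, ~~ Q x, Q y & ~~ P y] && ~~ [&& P y, ~~ Q y, Q x & ~~ P x].
  move=> x y nxy; apply/andP; split; apply/negP => /and4P [h1 h2 h3 h4].
    by move: nxy; rewrite J.
  by move: nxy; rewrite sE J.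
move: (F _ _ n02) (F _ _ n03) (F _ _ n04) (F _ _ n05) (F _ _ n13)
  (F _ _ n14) (F _ _ n15) (F _ _ n24) (F _ _ n25) (F _ _ n35)
  (cov a0) (cov a1) (cov a2) (cov a3) (cov a4) (cov a5) cnt => /=.
by case: (P a0); case: (Q a0); case: (P a1); case: (Q a1); case: (P a2); case: (Q a2);
   case: (P a3); case: (Q a3); case: (P a4); case: (Q a4); case: (P a5); case: (Q a5).
Qed.

Lemma combU (T : Type) (P Q : T -> bool) (E : rel T) (a0 a1 a2 a3 a4 a5 : T) :
  symmetric E ->
  (forall x, P x || Q x) ->
  count (fun x => P x && Q x) [:: a0; a1; a2; a3; a4; a5] <= 1 ->
  (forall x y, P x -> ~~ Q x -> Q y -> ~~ P y -> ~~ E x y) ->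
  E a0 a1 -> E a1 a2 -> E a2 a3 -> E a3 a4 -> E a4 a5 ->
  [|| [&& P a0, P a1, P a2 & P a3], [&& P a1, P a2, P a3 & P a4],
      [&& P a2, P a3, P a4 & P a5], [&& Q a0, Q a1, Q a2 & Q a3],
      [&& Q a1, Q a2, Q a3 & Q a4] | [&& Q a2, Q a3, Q a4 & Q a5]].
Proof.
move=> sE cov cnt J n01 n12 n23 n34 n45.
have F : forall x y, E x y ->
   ~~ [&& P x, ~~ Q x, Q y & ~~ P y] && ~~ [&& P y, ~~ Q y, Q x & ~~ P x].
  move=> x y nxy; apply/andP; split; apply/negP => /and4P [h1 h2 h3 h4].
    by move: nxy; apply/negP; rewrite J.
  by move: nxy; rewrite sE; apply/negP; rewrite J.
move: (F _ _ n01) (F _ _ n12) (F _ _ n23) (F _ _ n34) (F _ _ n45)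
  (cov a0) (cov a1) (cov a2) (cov a3) (cov a4) (cov a5) cnt => /=.
by case: (P a0); case: (Q a0); case: (P a1); case: (Q a1); case: (P a2); case: (Q a2);
   case: (P a3); case: (Q a3); case: (P a4); case: (Q a4); case: (P a5); case: (Q a5).
Qed.

Lemma P4of (T : finType) (e : rel T) (S : {set T}) a b c d :
  simple_graph e -> a \in S -> b \in S -> c \in S -> d \in S ->
  e a b -> e b c -> e c d -> ~~ e a c -> ~~ e b d -> ~~ e a d ->
  has_induced_P4 e S.
Proof.
move=> [sE irr] aS bS cS dS ab bc cd nac nbd nad.
have ne : forall x y, e x y -> x != y.
  by move=> x y; apply: contraTneq => ->; rewrite irr.
exists a, b, c, d; split.
- by rewrite aS bS cS dS.
- rewrite /= !inE !negb_or (ne _ _ ab) (ne _ _ bc) (ne _ _ cd) /=.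
  have -> : a != c by apply: contraNneq nad => ->.
  have -> : a != d by apply: contraNneq nac => ->; rewrite sE.
  by have -> : b != d by apply: contraNneq nad => <-.
- by rewrite ab bc cd.
- by rewrite nac nbd nad.
Qed.

Lemma KL (T : finType) (e : rel T) :
  simple_graph e -> pseudo_cograph e [set: T] ->
  forall a0 a1 a2 a3 a4 a5 : T, uniq [:: a0; a1; a2; a3; a4; a5] ->
  e a0 a1 -> e a1 a2 -> e a2 a3 -> e a3 a4 -> e a4 a5 ->
  ~~ e a0 a2 -> ~~ e a0 a3 -> ~~ e a0 a4 -> ~~ e a0 a5 -> ~~ e a1 a3 ->
  ~~ e a1 a4 -> ~~ e a1 a5 -> ~~ e a2 a4 -> ~~ e a2 a5 -> ~~ e a3 a5 -> False.
Proof.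
move=> Hs Hp a0 a1 a2 a3 a4 a5 Hu e01 e12 e23 e34 e45
  n02 n03 n04 n05 n13 n14 n15 n24 n25 n35.
case: Hp => [Hc | [S1 [S2 [v [_ [HU HI _ _] [C1 C2] HJU]]]]].
  have := max_card (mem [:: a0; a1; a2; a3; a4; a5]).
  rewrite (card_uniqP Hu) -cardsT => /leq_trans /(_ Hc).
  by [].
have cov : forall x, (x \in S1) || (x \in S2).
  by move=> x; have := in_setT x; rewrite -HU in_setU.
have vS : (v \in S1) && (v \in S2) by rewrite -in_setI HI set11.
case/andP: vS => vS1 vS2.
have cnt : count (fun x => (x \in S1) && (x \in S2)) [:: a0; a1; a2; a3; a4; a5] <= 1.
  have -> : count (fun x => (x \in S1) && (x \in S2)) [:: a0; a1; a2; a3; a4; a5]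
      = count_mem v [:: a0; a1; a2; a3; a4; a5].
    by apply: eq_count => x; rewrite -in_setI HI in_set1.
  by rewrite (count_uniq_mem _ Hu) leq_b1.
have D1 : forall x, x \in S1 -> x \notin S2 -> x \in S1 :\ v.
  by move=> x h1 h2; rewrite in_setD1 h1 andbT; apply: contraNneq h2 => ->.
have D2 : forall x, x \in S2 -> x \notin S1 -> x \in S2 :\ v.
  by move=> x h1 h2; rewrite in_setD1 h1 andbT; apply: contraNneq h2 => ->.
have sE := proj1 Hs.
have H : [|| [&& a0 \in S1, a1 \in S1, a2 \in S1 & a3 \in S1],
      [&& a1 \in S1, a2 \in S1, a3 \in S1 & a4 \in S1],
      [&& a2 \in S1, a3 \in S1, a4 \in S1 & a5 \in S1],
      [&& a0 \in S2, a1 \in S2, a2 \in S2 & a3 \in S2],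
      [&& a1 \in S2, a2 \in S2, a3 \in S2 & a4 \in S2] |
      [&& a2 \in S2, a3 \in S2, a4 \in S2 & a5 \in S2]].
  case: HJU => [J|J].
    apply: (combJ (P := fun x => x \in S1) (Q := fun x => x \in S2) sE cov cnt) => //.
    by move=> x y h1 h2 h3 h4; apply: J; [apply: D1 | apply: D2].
  apply: (combU (P := fun x => x \in S1) (Q := fun x => x \in S2) sE cov cnt) => //.
  by move=> x y h1 h2 h3 h4; apply: J; [apply: D1 | apply: D2].
case/or4P: H => [H|H|H|/orP[H|/orP[H|H]]]; case/and4P: H => h0 h1 h2 h3.
- by apply: C1; apply: (P4of Hs h0 h1 h2 h3).
- by apply: C1; apply: (P4of Hs h0 h1 h2 h3).
- by apply: C1; apply: (P4of Hs h0 h1 h2 h3).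
- by apply: C2; apply: (P4of Hs h0 h1 h2 h3).
- by apply: C2; apply: (P4of Hs h0 h1 h2 h3).
- by apply: C2; apply: (P4of Hs h0 h1 h2 h3).
Qed.
Ltac solve_walk c e01 e12 e23 e34 e45 hr hl u0 u1 u2 u3 u4 u5 ur :=
  rewrite /walk_in /=;
  rewrite ?c ?e01 ?e12 ?e23 ?e34 ?e45 ?hr ?hl ?u0 ?u1 ?u2 ?u3 ?u4 ?u5 ?ur.

Lemma short_walk (T : finType) (e : rel T) (U : {set T}) (x y : T) :
  (forall a0 a1 a2 a3 a4 a5 : T, uniq [:: a0; a1; a2; a3; a4; a5] ->
  e a0 a1 -> e a1 a2 -> e a2 a3 -> e a3 a4 -> e a4 a5 ->
  ~~ e a0 a2 -> ~~ e a0 a3 -> ~~ e a0 a4 -> ~~ e a0 a5 -> ~~ e a1 a3 ->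
  ~~ e a1 a4 -> ~~ e a1 a5 -> ~~ e a2 a4 -> ~~ e a2 a5 -> ~~ e a3 a5 -> False) ->
  forall n p, size p <= n -> walk_in e U x y p ->
  exists q, walk_in e U x y q /\ size q <= 4.
Proof.
move=> KL n; elim: n => [|n IH] p.
  by move=> hs hw; exists p; split => //; apply: leq_trans hs _.
move=> hs /and3P [hp hl ha].
case: (shortenP hp) hl => q hq hu hsub hl.
have hsq : size q <= n.+1.
  apply: leq_trans hs; apply: uniq_leq_size => //.
  by case/andP: hu.
have haq : all (fun z => z \in U) (x :: q).
  move: ha => /= /andP [-> /allP ha] /=; apply/allP => z /hsub; exact: ha.
have [small|big] := leqP (size q) 4.
  by exists q; split => //; rewrite /walk_in hq hl haq.
case: q hq hu hsub hl hsq haq big => [|a1 [|a2 [|a3 [|a4 [|a5 rest]]]]] // hq hu hsub hl hsq haq _.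
move: hq haq => /= /and5P [e01 e12 e23 e34 /andP [e45 hr]] /and5P [u0 u1 u2 u3 /and3P [u4 u5 ur]].
move: hl => /= hl.
have [c|n02] := boolP (e x a2).
  by apply: (IH [:: a2, a3, a4, a5 & rest]); [clear -hsq; move: hsq => /=; lia | solve_walk c e01 e12 e23 e34 e45 hr hl u0 u1 u2 u3 u4 u5 ur].
have [c|n03] := boolP (e x a3).
  by apply: (IH [:: a3, a4, a5 & rest]); [clear -hsq; move: hsq => /=; lia | solve_walk c e01 e12 e23 e34 e45 hr hl u0 u1 u2 u3 u4 u5 ur].
have [c|n04] := boolP (e x a4).
  by apply: (IH [:: a4, a5 & rest]); [clear -hsq; move: hsq => /=; lia | solve_walk c e01 e12 e23 e34 e45 hr hl u0 u1 u2 u3 u4 u5 ur].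
have [c|n05] := boolP (e x a5).
  by apply: (IH [:: a5 & rest]); [clear -hsq; move: hsq => /=; lia | solve_walk c e01 e12 e23 e34 e45 hr hl u0 u1 u2 u3 u4 u5 ur].
have [c|n13] := boolP (e a1 a3).
  by apply: (IH [:: a1, a3, a4, a5 & rest]); [clear -hsq; move: hsq => /=; lia | solve_walk c e01 e12 e23 e34 e45 hr hl u0 u1 u2 u3 u4 u5 ur].
have [c|n14] := boolP (e a1 a4).
  by apply: (IH [:: a1, a4, a5 & rest]); [clear -hsq; move: hsq => /=; lia | solve_walk c e01 e12 e23 e34 e45 hr hl u0 u1 u2 u3 u4 u5 ur].
have [c|n15] := boolP (e a1 a5).
  by apply: (IH [:: a1, a5 & rest]); [clear -hsq; move: hsq => /=; lia | solve_walk c e01 e12 e23 e34 e45 hr hl u0 u1 u2 u3 u4 u5 ur].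
have [c|n24] := boolP (e a2 a4).
  by apply: (IH [:: a1, a2, a4, a5 & rest]); [clear -hsq; move: hsq => /=; lia | solve_walk c e01 e12 e23 e34 e45 hr hl u0 u1 u2 u3 u4 u5 ur].
have [c|n25] := boolP (e a2 a5).
  by apply: (IH [:: a1, a2, a5 & rest]); [clear -hsq; move: hsq => /=; lia | solve_walk c e01 e12 e23 e34 e45 hr hl u0 u1 u2 u3 u4 u5 ur].
have [c|n35] := boolP (e a3 a5).
  by apply: (IH [:: a1, a2, a3, a5 & rest]); [clear -hsq; move: hsq => /=; lia | solve_walk c e01 e12 e23 e34 e45 hr hl u0 u1 u2 u3 u4 u5 ur].
exfalso; apply: (KL x a1 a2 a3 a4 a5) => //.
by move: hu; rewrite (_ : [:: x, a1, a2, a3, a4, a5 & rest] = [:: x; a1; a2; a3; a4; a5] ++ rest) // cat_uniq => /andP[].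
Qed.
Theorem mainTheorem10 (T : finType) (e : rel T) :
  simple_graph e -> pseudo_cograph e [set: T] ->
  (forall U : {set T}, connected_in e U -> diameter_le e U 4) /\
  (forall s : seq T, 6 <= size s -> ~ induced_path e s).
Proof.
move=> Hs Hp; have K := KL Hs Hp; split.
  move=> U HU x y xU yU; have [p hp] := HU x y xU yU.
  exact: (short_walk K (leqnn (size p)) hp).
case=> [|a0 [|a1 [|a2 [|a3 [|a4 [|a5 rest]]]]]] // _ [hu H].
have E : forall i j, i < 6 -> j < 6 ->
  e (nth a0 [:: a0, a1, a2, a3, a4, a5 & rest] i) (nth a0 [:: a0, a1, a2, a3, a4, a5 & rest] j)
  = (j == i.+1) || (i == j.+1).
  move=> i j hi hj; apply: H; apply: leq_trans (_ : 6 <= _) => //.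
apply: (K a0 a1 a2 a3 a4 a5).
- by move: hu; rewrite (_ : [:: a0, a1, a2, a3, a4, a5 & rest] = [:: a0; a1; a2; a3; a4; a5] ++ rest) // cat_uniq => /andP[].
- exact: (E 0 1).
- exact: (E 1 2).
- exact: (E 2 3).
- exact: (E 3 4).
- exact: (E 4 5).
- by rewrite (E 0 2).
- by rewrite (E 0 3).
- by rewrite (E 0 4).
- by rewrite (E 0 5).
- by rewrite (E 1 3).
- by rewrite (E 1 4).
- by rewrite (E 1 5).
- by rewrite (E 2 4).
- by rewrite (E 2 5).
- by rewrite (E 3 5).
Qed.
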